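(* Let $\varphi\in\mathbb{T}=\mathbb{R}/\mathbb{Z}$ be badly approximable and let $P\subseteq\mathbb{T}$ be an arc of length at least $\frac12$. For $x_0\in\mathbb{T}$ and each $k\in\mathbb{N}$ define the sequence $(x_i^k)_{i\ge0}$ by $x_0^k=x_0$ and $x_{i+1}^k=x_i^k+k\varphi$ (mod $1$). Then there exist $r>0$ and $d\in\mathbb{N}$, independent of $x_0$, such that $$\left|\{x_i^k : i\in\{1,2,\dots,dk\},\ x_i^k\in P\}\right|\ \ge\ rk$$ for all sufficiently large $k$.
   Context: A real number $\varphi$ is badly approximable if there exists $c>0$ such that $\left|\varphi-\frac pq\right|>\frac{c}{q^2}$ for all rationals $\frac pq$ (with $q\ge1$). The circle $\mathbb{T}$ is identified with $\mathbb{R}/\mathbb{Z}$. *)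

(* Defs.v *)
(* the circle T = R/Z, points represented by reals, reduced mod 1 via frac_part. *)
From Stdlib Require Import Reals Lra Lia List.
Open Scope R_scope.

Definition mod1 (x : R) : R := frac_part x.

Definition badly_approximable (phi : R) : Prop :=
  exists c : R, 0 < c /\
    forall (p : Z) (q : nat), (1 <= q)%nat ->
      Rabs (phi - IZR p / INR q) > c / (INR q ^ 2).

(* P (a subset of T, given as a predicate on representatives in [0,1)) is an
   arc of length L: it contains the open arc (a, a+L) and is contained in the
   closed arc [a, a+L] (mod 1); this covers open, closed and half-open arcs. *)
Definition is_arc (P : R -> Prop) (L : R) : Prop :=
  0 < L <= 1 /\
  exists a : R,
    (forall x, 0 < mod1 (x - a) < L -> P (mod1 x)) /\
    (forall x, P (mod1 x) -> mod1 (x - a) <= L).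

Fixpoint orbit (x0 phi : R) (k : nat) (i : nat) : R :=
  match i with
  | O => mod1 x0
  | S i' => mod1 (orbit x0 phi k i' + INR k * phi)
  end.

(* Main.v *)
Require Import Defs.
From Stdlib Require Import Reals Lra Lia List Arith ZArith FinFun Classical.
Open Scope R_scope.

Lemma floor_unique (x : R) (m : Z) : IZR m <= x < IZR m + 1 -> Int_part x = m.
Proof.
  intros [H1 H2]. destruct (base_Int_part x) as [B1 B2].
  assert (A1 : (Int_part x < m + 1)%Z) by (apply lt_IZR; rewrite plus_IZR; simpl; lra).
  assert (A2 : (m < Int_part x + 1)%Z) by (apply lt_IZR; rewrite plus_IZR; simpl; lra).
  lia.
Qed.

Lemma frac_bounds (x : R) : 0 <= frac_part x < 1.
Proof.
  unfold frac_part. destruct (base_Int_part x). split; [lra|].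
  destruct (Rle_or_lt 1 (x - IZR (Int_part x))); [|lra].
  assert (HH : Int_part x = (Int_part x + 1)%Z).
  { apply floor_unique. rewrite plus_IZR. simpl. split; [lra|].
    lra. }
  lia.
Qed.

Lemma frac_eq (x : R) (m : Z) : IZR m <= x < IZR m + 1 -> frac_part x = x - IZR m.
Proof. intros H. unfold frac_part. rewrite (floor_unique x m H). reflexivity. Qed.

Lemma frac_shift (x : R) (m : Z) : frac_part (x + IZR m) = frac_part x.
Proof.
  unfold frac_part at 2. destruct (base_Int_part x).
  rewrite (frac_eq _ (Int_part x + m)); rewrite plus_IZR; [ring|lra].
Qed.

Lemma frac_frac (a b : R) : frac_part (frac_part a + b) = frac_part (a + b).
Proof.
  unfold frac_part at 2. replace (a - IZR (Int_part a) + b) with (a + b + IZR (- Int_part a))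
    by (rewrite opp_IZR; ring).
  apply frac_shift.
Qed.

Lemma orbit_eq (x0 phi : R) (k i : nat) :
  orbit x0 phi k i = mod1 (x0 + INR i * (INR k * phi)).
Proof.
  induction i as [|i IH]; simpl.
  - unfold mod1. f_equal. ring.
  - rewrite IH. unfold mod1. rewrite frac_frac. f_equal. destruct i; simpl; ring.
Qed.

Lemma notI_interval (w : R) : ~ (0 < frac_part w < 1/2) ->
  exists m : Z, IZR m + 1/2 <= w <= IZR m + 1.
Proof.
  intros H. pose proof (frac_bounds w) as Hb. unfold frac_part in *.
  destruct (base_Int_part w).
  destruct (Req_dec (w - IZR (Int_part w)) 0) as [E|E].
  - exists (Int_part w - 1)%Z. rewrite minus_IZR. simpl. lra.
  - exists (Int_part w). lra.
Qed.

Lemma same_m (w s : R) (m m' : Z) : Rabs s < 1/2 ->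
  IZR m + 1/2 <= w <= IZR m + 1 -> IZR m' + 1/2 <= w + s <= IZR m' + 1 -> m = m'.
Proof.
  intros Hs H1 H2. apply Rabs_def2 in Hs.
  assert (A1 : (m' < m + 1)%Z) by (apply lt_IZR; rewrite plus_IZR; simpl; lra).
  assert (A2 : (m < m' + 1)%Z) by (apply lt_IZR; rewrite plus_IZR; simpl; lra).
  lia.
Qed.

Lemma block (Z0 s : R) (n : Z) : 1/8 <= Rabs s < 1/2 ->
  exists j : nat, (j < 6)%nat /\ 0 < frac_part (Z0 + INR j * (IZR n + s)) < 1/2.
Proof.
  intros Hs. apply NNPP. intros Hn.
  assert (G : forall j, (j < 6)%nat -> exists m : Z, IZR m + 1/2 <= Z0 + INR j * s <= IZR m + 1).
  { intros j Hj. apply notI_interval. intros C. apply Hn. exists j. split; [exact Hj|].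
    replace (Z0 + INR j * (IZR n + s)) with (Z0 + INR j * s + IZR (Z.of_nat j * n))
      by (rewrite mult_IZR, <- INR_IZR_INZ; ring).
    rewrite frac_shift. exact C. }
  destruct (G 0%nat ltac:(lia)) as [m0 H0].
  destruct (G 1%nat ltac:(lia)) as [m1 H1].
  destruct (G 2%nat ltac:(lia)) as [m2 H2].
  destruct (G 3%nat ltac:(lia)) as [m3 H3].
  destruct (G 4%nat ltac:(lia)) as [m4 H4].
  destruct (G 5%nat ltac:(lia)) as [m5 H5].
  simpl in *.
  assert (Hs' : Rabs s < 1/2) by lra.
  assert (E1 := same_m (Z0 + 0 * s) s m0 m1 Hs' H0 ltac:(replace (Z0 + 0 * s + s) with (Z0 + 1 * s) by ring; exact H1)).
  assert (E2 := same_m (Z0 + 1 * s) s m1 m2 Hs' H1 ltac:(replace (Z0 + 1 * s + s) with (Z0 + (1+1) * s) by ring; exact H2)).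
  assert (E3 := same_m (Z0 + (1+1) * s) s m2 m3 Hs' H2 ltac:(replace (Z0 + (1+1) * s + s) with (Z0 + (1+1+1) * s) by ring; exact H3)).
  assert (E4 := same_m _ s m3 m4 Hs' H3 ltac:(replace (Z0 + (1+1+1) * s + s) with (Z0 + (1+1+1+1) * s) by ring; exact H4)).
  assert (E5 := same_m _ s m4 m5 Hs' H4 ltac:(replace (Z0 + (1+1+1+1) * s + s) with (Z0 + (1+1+1+1+1) * s) by ring; exact H5)).
  subst. unfold Rabs in Hs. destruct (Rcase_abs s); simpl in *; lra.
Qed.

Lemma step (g eps : R) : 0 < eps ->
  (forall n : Z, Rabs (g - IZR n) > eps) ->
  (forall n : Z, Rabs (g - IZR n) <> 1/2) ->
  exists (h : nat) (n : Z), (1 <= h)%nat /\ INR h <= Rmax 1 (1/(4*eps)) /\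
    1/8 <= Rabs (INR h * g - IZR n) < 1/2.
Proof.
  intros He H1 H2.
  set (n0 := Int_part (g + 1/2)).
  destruct (base_Int_part (g + 1/2)) as [B1 B2]. fold n0 in B1, B2.
  set (dl := Rabs (g - IZR n0)).
  assert (Hd : dl <= 1/2) by (unfold dl, Rabs; destruct Rcase_abs; lra).
  assert (Hd2 : dl <> 1/2) by apply H2.
  assert (Hd3 : dl > eps) by apply H1.
  destruct (Rle_or_lt (1/8) dl) as [C|C].
  - exists 1%nat, n0. simpl. split; [lia|]. split; [apply Rmax_l|].
    replace (1 * g) with g by ring. fold dl. lra.
  - set (y := 1/(4*dl)).
    assert (Hy : y > 2).
    { unfold y. apply Rlt_gt. apply (Rmult_lt_reg_r (4*dl)); [lra|].
      field_simplify; lra. }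
    destruct (archimed y) as [A1 A2].
    assert (Hu : (0 <= up y - 1)%Z) by (apply le_IZR; rewrite minus_IZR; simpl; lra).
    exists (Z.to_nat (up y - 1)), (Z.of_nat (Z.to_nat (up y - 1)) * n0)%Z.
    rewrite INR_IZR_INZ, mult_IZR, Z2Nat.id by exact Hu. rewrite minus_IZR. simpl.
    split.
    + apply Nat2Z.inj_le. rewrite Z2Nat.id by exact Hu. apply le_IZR.
      rewrite minus_IZR. simpl. lra.
    + assert (Hyl : y <= 1/(4*eps)).
      { unfold y. apply Rmult_le_compat_l; [lra|]. apply Rinv_le_contravar; lra. }
      split. { eapply Rle_trans; [|apply Rmax_r]. lra. }
      replace ((IZR (up y) - 1) * g - (IZR (up y) - 1) * IZR n0)
        with ((IZR (up y) - 1) * (g - IZR n0)) by ring.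
      rewrite Rabs_mult. rewrite (Rabs_right (IZR (up y) - 1)) by lra. fold dl.
      assert (E : y * dl = 1/4) by (unfold y; field; lra).
      split; nra.
Qed.

Definition gidx (h m j : nat) : nat := 1 + m mod h + h * (6 * (m / h) + j).

Lemma gidx_inj h m j m' j' : (1 <= h)%nat -> (j < 6)%nat -> (j' < 6)%nat ->
  gidx h m j = gidx h m' j' -> m = m'.
Proof.
  intros Hh Hj Hj' E. unfold gidx in E.
  assert (Hh0 : h <> 0%nat) by lia.
  set (A := (m mod h + h * (6 * (m / h) + j))%nat).
  assert (EA : A = (m' mod h + h * (6 * (m' / h) + j'))%nat) by (unfold A; lia).
  assert (o1 : m mod h = A mod h).
  { apply (Nat.mod_unique _ _ (6 * (m / h) + j)); [apply Nat.mod_upper_bound; lia| unfold A; lia]. }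
  assert (o2 : m' mod h = A mod h).
  { apply (Nat.mod_unique _ _ (6 * (m' / h) + j')); [apply Nat.mod_upper_bound; lia| rewrite EA; lia]. }
  assert (q1 : (6 * (m / h) + j = A / h)%nat).
  { apply (Nat.div_unique _ _ _ (m mod h)); [apply Nat.mod_upper_bound; lia| unfold A; lia]. }
  assert (q2 : (6 * (m' / h) + j' = A / h)%nat).
  { apply (Nat.div_unique _ _ _ (m' mod h)); [apply Nat.mod_upper_bound; lia| rewrite EA; lia]. }
  assert (Eb : (m / h = m' / h)%nat) by lia.
  rewrite (Nat.div_mod m h Hh0), (Nat.div_mod m' h Hh0). lia.
Qed.

Lemma build (h : nat) (Q : nat -> Prop) (NB : nat) : (1 <= h)%nat ->
  (forall m, (m < NB)%nat -> exists j, (j < 6)%nat /\ Q (gidx h m j)) ->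
  exists li, NoDup li /\ length li = NB /\
    forall i, In i li -> exists m j, (m < NB)%nat /\ (j < 6)%nat /\ i = gidx h m j /\ Q i.
Proof.
  intros Hh. induction NB as [|NB IH]; intros HQ.
  - exists nil. repeat split; [constructor| intros i []].
  - destruct IH as [li [Hnd [Hl Hin]]]. { intros m Hm. apply HQ. lia. }
    destruct (HQ NB ltac:(lia)) as [j [Hj HQj]].
    exists (gidx h NB j :: li). split; [|split].
    + constructor; [|exact Hnd]. intros Hi. destruct (Hin _ Hi) as [m [j' [Hm [Hj' [E _]]]]].
      apply gidx_inj in E; [lia|lia|lia|lia].
    + simpl. lia.
    + intros i [<-|Hi].
      * exists NB, j. repeat split; auto.
      * destruct (Hin _ Hi) as [m [j' [Hm [Hj' [E Hq]]]]]. exists m, j'. repeat split; auto.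
Qed.

Theorem theorem3p4 (phi : R) (P : R -> Prop) (L : R) :
  badly_approximable phi ->
  is_arc P L -> 1/2 <= L ->
  exists (r : R) (d : nat), 0 < r /\
    forall x0 : R,
      exists K : nat, forall k : nat, (K <= k)%nat ->
        exists l : list R,
          NoDup l /\ r * INR k <= INR (length l) /\
          forall y, In y l ->
            exists i : nat, (1 <= i <= d * k)%nat /\
              y = orbit x0 phi k i /\ P y.
Proof.
  intros [c [Hc H]] [HL [a [Harc1 _]]] HL2.
  assert (L0 : forall p q, (1 <= q)%nat -> INR q * phi <> IZR p).
  { intros p q Hq E. specialize (H p q Hq).
    assert (Hq' : 0 < INR q) by (apply lt_0_INR; lia).
    replace (phi - IZR p / INR q) with 0 in H by (rewrite <- E; field; lra).
    rewrite Rabs_R0 in H. assert (0 < c / INR q ^ 2) by (apply Rdiv_lt_0_compat; [lra| apply pow_lt; lra]).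
    lra. }
  assert (F1 : forall (k : nat) n, (1 <= k)%nat -> Rabs (INR k * phi - IZR n) > c / INR k).
  { intros k n Hk. specialize (H n k Hk).
    assert (Hk' : 0 < INR k) by (apply lt_0_INR; lia).
    replace (INR k * phi - IZR n) with (INR k * (phi - IZR n / INR k)) by (field; lra).
    rewrite Rabs_mult, (Rabs_right (INR k)) by lra.
    replace (c / INR k) with (INR k * (c / INR k ^ 2)) by (field; lra).
    apply Rmult_lt_compat_l; lra. }
  assert (F2 : forall (k : nat) n, (1 <= k)%nat -> Rabs (INR k * phi - IZR n) <> 1/2).
  { intros k n Hk E. unfold Rabs in E. destruct (Rcase_abs _).
    - apply (L0 (2 * n - 1)%Z (2 * k)%nat); [lia|].
      rewrite minus_IZR, mult_IZR, mult_INR. simpl. lra.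
    - apply (L0 (2 * n + 1)%Z (2 * k)%nat); [lia|].
      rewrite plus_IZR, mult_IZR, mult_INR. simpl. lra. }
  destruct (archimed (1/(4*c))) as [U1 U2].
  assert (Hc4 : 0 < 1/(4*c)) by (apply Rdiv_lt_0_compat; lra).
  assert (Hup : (1 <= up (1/(4*c)))%Z) by (assert (0 < up (1/(4*c)))%Z by (apply lt_IZR; simpl; lra); lia).
  set (D := Z.to_nat (up (1/(4*c)))).
  assert (HD : INR D = IZR (up (1/(4*c)))) by (unfold D; rewrite INR_IZR_INZ, Z2Nat.id by lia; reflexivity).
  assert (HD1 : (1 <= D)%nat) by (unfold D; lia).
  exists 1, (6 + 6 * D)%nat. split; [lra|].
  intros x0. exists 1%nat. intros k Hk.
  assert (Hk' : 0 < INR k) by (apply lt_0_INR; lia).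
  set (g := INR k * phi).
  destruct (step g (c / INR k)) as [h [n [Hh [Hhb Hs]]]].
  { apply Rdiv_lt_0_compat; lra. }
  { intros; apply F1; exact Hk. }
  { intros; apply F2; exact Hk. }
  assert (HhD : (h <= D * k)%nat).
  { apply INR_le. eapply Rle_trans; [exact Hhb|]. rewrite mult_INR, HD.
    apply Rmax_lub.
    - assert (1 <= INR k) by (apply (le_INR 1); lia).
      assert (1 <= IZR (up (1 / (4 * c)))) by (apply IZR_le; lia). nra.
    - replace (1 / (4 * (c / INR k))) with (1/(4*c) * INR k) by (field; lra).
      apply Rmult_le_compat_r; lra. }
  set (B := S (k / h)).
  set (Q := fun i => P (orbit x0 phi k i)).
  destruct (build h Q (h * B) Hh) as [li [Hnd [Hlen Hin]]].
  { intros m Hm.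
    set (Z0 := x0 + INR (1 + m mod h + h * (6 * (m / h))) * g - a).
    destruct (block Z0 (INR h * g - IZR n) n Hs) as [j [Hj Hfr]].
    exists j. split; [exact Hj|]. unfold Q. rewrite orbit_eq.
    apply (Harc1 (x0 + INR (gidx h m j) * (INR k * phi))).
    replace (x0 + INR (gidx h m j) * (INR k * phi) - a)
      with (Z0 + INR j * (IZR n + (INR h * g - IZR n))).
    2:{ unfold Z0, gidx, g. rewrite !plus_INR, !mult_INR, !plus_INR, !mult_INR. ring. }
    simpl in Hfr. unfold mod1. split; [lra|]. apply Rlt_le_trans with (1/2); [exact (proj2 Hfr)|exact HL2]. }
  exists (map (orbit x0 phi k) li). split; [|split].
  - apply Injective_map_NoDup; [|exact Hnd].
    intros i i' E. rewrite !orbit_eq in E. unfold mod1, frac_part in E.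
    destruct (Nat.lt_trichotomy i i') as [C|[C|C]]; [exfalso| exact C| exfalso].
    + apply (L0 (Int_part (x0 + INR i' * (INR k * phi)) - Int_part (x0 + INR i * (INR k * phi)))%Z
               ((i' - i) * k)%nat); [nia|].
      rewrite minus_IZR, mult_INR, minus_INR by lia. lra.
    + apply (L0 (Int_part (x0 + INR i * (INR k * phi)) - Int_part (x0 + INR i' * (INR k * phi)))%Z
               ((i - i') * k)%nat); [nia|].
      rewrite minus_IZR, mult_INR, minus_INR by lia. lra.
  - rewrite length_map, Hlen. rewrite Rmult_1_l. apply le_INR.
    unfold B. apply Nat.lt_le_incl, Nat.mul_succ_div_gt. lia.
  - intros y Hy. apply in_map_iff in Hy. destruct Hy as [i [Ey Hi]].
    destruct (Hin i Hi) as [m [j [Hm [Hj [Ei HQ]]]]].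
    exists i. split; [|split; [symmetry; exact Ey| rewrite <- Ey; exact HQ]].
    assert (Hb : (m / h < B)%nat) by (apply Nat.Div0.div_lt_upper_bound; lia).
    assert (Ho : (m mod h < h)%nat) by (apply Nat.mod_upper_bound; lia).
    assert (Hkh : (h * (k / h) <= k)%nat) by apply Nat.Div0.mul_div_le.
    assert (Hi1 : (i <= 6 * (h * B))%nat).
    { rewrite Ei. unfold gidx. set (b := (m / h)%nat) in *. set (o := (m mod h)%nat) in *.
      assert (h * (6 * b + j) <= h * (6 * B - 1))%nat by (apply Nat.mul_le_mono_l; lia).
      assert (h * (6 * B - 1) = 6 * (h * B) - h)%nat by nia. lia. }
    unfold B in Hi1. rewrite Ei in *. unfold gidx in *. nia.
Qed.
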